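(* For every integer $s\ge1$, $F_{s,2}(x)=\binom{x-2}{s-1}=\frac{1}{(s-1)!}\prod_{p=2}^{s}(x-p)$. For every integer $s\ge2$, $F_{s,3}(x)=\frac{1}{(s-1)!}(x-2s)\prod_{p=3}^{s}(x-p)$ (an empty product equals $1$).
   Context: For an integer $j\ge0$, $\binom{x}{j}=x(x-1)\cdots(x-j+1)/j!$ as a polynomial in $x$, and $\binom{x}{j}=0$ for $j<0$. For integers $s\ge1$, $k\ge1$, the Moser polynomial is $F_{s,k}(x)=\sum_{p=1}^{s}(-1)^{p-1}p^{k-1}\binom{x}{s-p}$. *)

(* Defs.v *)
From HB Require Import structures.
From mathcomp Require Import all_boot all_order all_algebra.
Set Implicit Arguments. Unset Strict Implicit. Unset Printing Implicit Defensive.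
Import Order.TTheory GRing.Theory Num.Theory.
Local Open Scope ring_scope.

Definition binomP (q : {poly rat}) (j : nat) : {poly rat} :=
  ((j`!)%:R)^-1 *: \prod_(i < j) (q - (i%:R)%:P).

Definition binomZ (j : int) : {poly rat} :=
  match j with
  | Posz n => binomP 'X n
  | Negz _ => 0
  end.

Definition Moser (s k : nat) : {poly rat} :=
  \sum_(1 <= p < s.+1) ((-1) ^+ (p.-1) * (p ^ (k.-1))%:R) *: binomZ (s%:Z - p%:Z).

(* Main.v *)
Require Import Defs.
From HB Require Import structures.
From mathcomp Require Import all_boot all_order all_algebra.
From mathcomp Require Import zify ring.
Import Order.TTheory GRing.Theory Num.Theory.
Local Open Scope ring_scope.

Definition H (s : nat) (f : nat -> rat) : {poly rat} :=
  \sum_(1 <= p < s.+1) ((-1) ^+ (p.-1) * f p) *: binomZ (s%:Z - p%:Z).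

Lemma H0 f : H 0 f = 0.
Proof. by rewrite /H big_geq. Qed.

Lemma Hrec s f : H s.+1 f = f 1%N *: binomP 'X s - H s (fun p => f p.+1).
Proof.
rewrite /H big_nat_recl //= expr0 mul1r.
idtac.
rewrite subn1 /=. congr (_ + _). rewrite -sumrN; apply: eq_big_nat => p /andP[p1 _].
have -> : (s.+1%:Z - p.+1%:Z) = (s%:Z - p%:Z) by lia.
case: p p1 => // p _ /=; rewrite exprS !mulN1r -scaleNr; congr (_ *: _); ring.
Qed.

Lemma Hlin s f g a b : H s (fun p => a * f p + b * g p) = a *: H s f + b *: H s g.
Proof.
rewrite /H !scaler_sumr -big_split /=; apply: eq_bigr => p _.
rewrite !scalerA -scalerDl; congr (_ *: _); ring.
Qed.

Lemma Hext s f g : (forall p, f p = g p) -> H s f = H s g.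
Proof. by move=> e; apply: eq_bigr => p _; rewrite e. Qed.

Lemma binomP0 q : binomP q 0 = 1.
Proof. by rewrite /binomP big_ord0 invr1 scale1r. Qed.

Lemma binomP1 q : binomP q 1 = q.
Proof. by rewrite /binomP big_ord1 invr1 scale1r subr0. Qed.

Lemma pascal q n : binomP q n.+1 = binomP (q - 1%:P) n.+1 + binomP (q - 1%:P) n.
Proof.
rewrite /binomP big_ord_recl big_ord_recr /=.
set P := \prod_(i < n) (q - 1%:P - _).
have -> : \prod_(i < n) (q - (bump 0 i)%:R%:P) = P.
  apply: eq_bigr => i _; rewrite /bump /= add1n -addn1 natrD polyCD opprD addrA.
  by rewrite addrAC.
rewrite subr0 factS natrM invfM -scalerA.
have nz : (n.+1%:R : rat) != 0 by rewrite pnatr_eq0.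
have -> : (n`!%:R)^-1 *: P = (n.+1%:R)^-1 *: ((n`!%:R)^-1 *: (n.+1%:R *: P)).
  by rewrite !scalerA mulrAC mulVf // mul1r.
rewrite -[(_ / _) *: _]scalerA -!scalerDr; congr (_ *: _); congr (_ *: _).
rewrite -mul_polyC [_%:P * P]mulrC -mulrDr mulrC; congr (_ * _).
rewrite -natr1 polyCD rmorph_nat; ring.
Qed.

Lemma eXs (a b c : rat) : a + b = c -> 'X - a%:P - b%:P = 'X - c%:P :> {poly rat}.
Proof. by move=> <-; rewrite -addrA -opprD -polyCD. Qed.

Lemma G1 n : H n.+1 (fun _ => 1) = binomP ('X - 1%:P) n.
Proof.
elim: n => [|n IH]; first by rewrite Hrec H0 subr0 scale1r !binomP0.
by rewrite Hrec scale1r IH pascal addrK.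
Qed.

Lemma G2 n : H n.+1 (fun p => p%:R) = binomP ('X - 2%:P) n.
Proof.
elim: n => [|n IH]; first by rewrite Hrec H0 subr0 scale1r !binomP0.
rewrite Hrec scale1r (@Hext _ _ (fun p => 1 * p%:R + 1 * 1)); last first.
  by move=> p; rewrite -natr1 !mul1r.
rewrite Hlin !scale1r IH G1 pascal pascal (@eXs 1 1 2) //.
by rewrite -[_ + _ + binomP _ n]addrA addrK.
Qed.

Lemma G3 n : H n.+2 (fun p => (p ^ 2)%N%:R) =
  binomP ('X - 2%:P) n.+1 - 2 *: binomP ('X - 3%:P) n.
Proof.
elim: n => [|n IH].
  rewrite Hrec Hrec H0 subr0 /= binomP1 binomP0 !binomP1 !binomP0 scale1r.
  by rewrite !alg_polyC -addrA -opprD -polyCD -natrD.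
rewrite Hrec (@Hext _ _ (fun p => 1 * (p ^ 2)%N%:R + 1 * (2 * p%:R + 1))); last first.
  by move=> p; rewrite !natrX -natr1; ring.
rewrite (Hlin _ (fun p => (p ^ 2)%N%:R) (fun p => 2 * p%:R + 1)).
rewrite (@Hext _ (fun p => 2 * p%:R + 1) (fun p => 2 * p%:R + 1 * 1)); last by move=> p; rewrite mulr1.
rewrite Hlin !scale1r IH G1 G2.
rewrite (pascal 'X n.+1) (pascal ('X - 1%:P) n.+1) (@eXs 1 1 2) //.
rewrite (pascal ('X - 2%:P) n) (@eXs 2 1 3) //.
rewrite !scaler_nat !mulr2n; ring.
Qed.

Lemma eXs2 (a b c d : rat) : a + b = c + d ->
  'X - a%:P - b%:P = 'X - c%:P - d%:P :> {poly rat}.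
Proof. by move=> e; rewrite -!addrA -!opprD -!polyCD e. Qed.

Lemma prodshift (a : nat) n :
  \prod_(a <= p < (n + a)%N) ('X - (p%:R)%:P) =
  \prod_(i < n) ('X - a%:R%:P - i%:R%:P) :> {poly rat}.
Proof.
rewrite -{1}[a]add0n big_addn addnK big_mkord; apply: eq_bigr => i _.
by rewrite (@eXs (a%:R) (i%:R) ((i + a)%N%:R)) // natrD addrC.
Qed.

Theorem mainTheorem6 :
  (forall s : nat, (1 <= s)%N ->
     Moser s 2 = binomP ('X - 2%:P) s.-1 /\
     Moser s 2 = (((s.-1)`!)%:R)^-1 *: \prod_(2 <= p < s.+1) ('X - (p%:R)%:P)) /\
  (forall s : nat, (2 <= s)%N ->
     Moser s 3 = (((s.-1)`!)%:R)^-1 *: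
       (('X - ((2 * s)%:R)%:P) * \prod_(3 <= p < s.+1) ('X - (p%:R)%:P))).
Proof.
split.
  case=> // n _ /=.
  have -> : Moser n.+1 2 = binomP ('X - 2%:P) n.
    rewrite -G2; apply: Hext => p; by rewrite expn1.
  split => //.
  by have := prodshift 2 n; rewrite addn2 => ->.
case=> // [] [] // n _ /=.
have -> : Moser n.+2 3 = H n.+2 (fun p => (p ^ 2)%N%:R) by [].
rewrite G3; have := prodshift 3 n; rewrite addn3 => ->.
set P := \prod_(i < n) _.
rewrite /binomP big_ord_recl /=.
have -> : \prod_(i < n) ('X - 2%:P - (bump 0 i)%:R%:P) = P.
  apply: eq_bigr => i _; rewrite /bump /= add1n -addn1 natrD polyCD opprD addrA.
  rewrite (@eXs 1 1 2) //; apply: eXs2; rewrite -[1]/(1%:R) -!natrD; congr (_%:R); lia.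
have key : 2 *: ((n`!)%:R^-1 *: P) =
    ((n.+1)`!)%:R^-1 *: ((2 * n.+1)%N%:R%:P * P) :> {poly rat}.
  rewrite mul_polyC !scalerA; congr (_ *: _).
  rewrite factS !natrM invfM; field.
  by rewrite pnatr_eq0 -lt0n fact_gt0 /= -[1]/(1%:R) -natrD pnatr_eq0.
rewrite key -scalerBr; congr (_ *: _); rewrite subr0 -mulrBl; congr (_ * _).
apply: eXs; rewrite -natrD; congr (_%:R); lia.
Qed.
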